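(* Let $\boldsymbol X=A\times_{\max}\boldsymbol Z$ be a recursive max-linear model on a DAG $\mathcal D=(V,E)$ satisfying Assumptions A, fix any $a>1$, and let $O\subseteq V$ satisfy $\mathrm{An}(O)\cap(V\setminus O)=\emptyset$. Then $j\in V\setminus O$ satisfies $\mathrm{an}(j)\cap(V\setminus O)=\emptyset$ if and only if $$\sum_{\ell\in (V\setminus O)\setminus\{j\}}\big(a_{i\ell}^2\vee a^2a_{j\ell}^2-a_{i\ell}^2\vee a_{j\ell}^2\big)=(a^2-1)\sum_{\ell\in (V\setminus O)\setminus\{j\}}a_{j\ell}^2\quad\text{for all } i\in V\setminus(O\cup\{j\}).$$
   Context: Let $\mathcal D=(V,E)$ be a directed acyclic graph with $V=\{1,\dots,d\}$; $\mathrm{pa}(i)$, $\mathrm{an}(i)$ denote parents and ancestors (nodes with a directed path to $i$) of $i$, $\mathrm{An}(i)=\mathrm{an}(i)\cup\{i\}$, $\mathrm{An}(U)=\bigcup_{u\in U}\mathrm{An}(u)$; $\vee$ denotes maximum. A recursive max-linear model (RMLM) on $\mathcal D$ is the unique solution of $X_i=\bigvee_{k\in\mathrm{pa}(i)}c_{ik}X_k\vee c_{ii}Z_i$, $i\in V$, with edge weights $c_{ik}>0$ ($k\in \mathrm{pa}(i)$), $c_{ii}>0$; it equals $X_i=(A\times_{\max}\boldsymbol Z)_i=\bigvee_{j\in V}a_{ij}Z_j$ where $a_{ii}=c_{ii}$, $a_{ij}$ for $j\in\mathrm{an}(i)$ is the maximum over all directed paths $j=\ell_0\to\ell_1\to\dots\to\ell_m=i$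 of $c_{jj}c_{\ell_1\ell_0}\cdots c_{\ell_m\ell_{m-1}}$, and $a_{ij}=0$ for $j\notin\mathrm{An}(i)$. Assumptions A: (A1) $Z_1,\dots,Z_d$ are independent, nonnegative, atom-free, with $n\,\mathbb P(n^{-1/2}Z_i>z)\to z^{-2}$ as $n\to\infty$ for all $z>0$; (A2) the norm is the Euclidean norm; (A3) $A$ is standardised, i.e. each row is divided by its Euclidean norm so that $\sum_{j\in V}a_{ij}^2=1$ for all $i$ (the model is taken as $\boldsymbol X=A\times_{\max}\boldsymbol Z$ with this standardised $A$). Under these assumptions it is known that $a_{ij}>0$ iff $j\in\mathrm{An}(i)$, and $a_{jj}>a_{ij}$ for all $i\neq j$. *)

(* Defs.v *)
From mathcomp Require Import all_boot all_order all_algebra.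
From mathcomp Require Import reals.
Set Implicit Arguments. Unset Strict Implicit. Unset Printing Implicit Defensive.
Import Order.TTheory GRing.Theory Num.Theory.
Local Open Scope ring_scope.

(* Vertex set V = 'I_d.  The DAG is given by an edge relation E : rel 'I_d,
   with  E k i  meaning the edge k -> i, i.e. k \in pa(i). *)

Definition acyclic (d : nat) (E : rel 'I_d) : Prop :=
  forall i j : 'I_d, E i j -> ~~ connect E j i.

Definition an (d : nat) (E : rel 'I_d) (i : 'I_d) : {set 'I_d} :=
  [set j | (j != i) && connect E j i].

Definition An (d : nat) (E : rel 'I_d) (i : 'I_d) : {set 'I_d} :=
  [set j | connect E j i].

Definition AnS (d : nat) (E : rel 'I_d) (U : {set 'I_d}) : {set 'I_d} :=
  \bigcup_(u in U) An E u.

(* edge-weight product along a path x -> t_1 -> ... -> t_m: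
   c_{t1 x} * c_{t2 t1} * ... ; c i k is the weight of the edge k -> i *)
Fixpoint path_weight (R : realType) (d : nat) (c : 'I_d -> 'I_d -> R)
  (x : 'I_d) (t : seq 'I_d) : R :=
  match t with
  | [::] => 1
  | y :: t' => c y x * path_weight c y t'
  end.

(* Unstandardised max-linear coefficient a_{ij}: maximum over all directed
   paths j = l_0 -> l_1 -> ... -> l_m = i of c_jj * c_{l1 l0} ... c_{lm l(m-1)}
   (0 if there is no path).  In a DAG on d nodes every directed path has
   fewer than d edges, so the maximum ranges over paths with m < d edges. *)
Definition mlcoef (R : realType) (d : nat) (E : rel 'I_d)
  (c : 'I_d -> 'I_d -> R) (i j : 'I_d) : R :=
  \big[Num.max/0]_(m < d)
    \big[Num.max/0]_(t : m.-tuple 'I_d | path E j t && (last j t == i))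
       (c j j * path_weight c j t).

Definition stdcoef (R : realType) (d : nat) (E : rel 'I_d)
  (c : 'I_d -> 'I_d -> R) (i j : 'I_d) : R :=
  mlcoef E c i j / Num.sqrt (\sum_(l < d) mlcoef E c i l ^+ 2).

(* Main.v *)
Require Import Defs.
From mathcomp Require Import all_boot all_order all_algebra.
From mathcomp Require Import reals lra.
Import Order.TTheory GRing.Theory Num.Theory.
Local Open Scope ring_scope.
Set Implicit Arguments. Unset Strict Implicit.

Section BM.
Variable R : realType.

Lemma bm_ge_seq (I : eqType) (r : seq I) (P : pred I) (F : I -> R) i0 :
  i0 \in r -> P i0 -> F i0 <= \big[Num.max/0]_(i <- r | P i) F i.
Proof.
elim: r => [//|x r IH]; rewrite inE big_cons => /orP [/eqP <-|Hr] HP.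
  by rewrite HP le_max lexx.
have := IH Hr HP; case: (P x) => // H; by rewrite le_max H orbT.
Qed.

Lemma bm_ge (I : finType) (P : pred I) (F : I -> R) i0 :
  P i0 -> F i0 <= \big[Num.max/0]_(i | P i) F i.
Proof. by move=> HP; apply: bm_ge_seq => //; rewrite mem_index_enum. Qed.


Lemma bm_ge0_seq (I : Type) (r : seq I) (P : pred I) (F : I -> R) :
  0 <= \big[Num.max/0]_(i <- r | P i) F i.
Proof.
elim: r => [|x r IH]; first by rewrite big_nil.
by rewrite big_cons; case: (P x) => //; rewrite le_max IH orbT.
Qed.

Lemma bm_cases (I : Type) (r : seq I) (P : pred I) (F : I -> R) :
  \big[Num.max/0]_(i <- r | P i) F i = 0 \/
  exists2 i, P i & \big[Num.max/0]_(i <- r | P i) F i = F i.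
Proof.
apply: (big_ind (fun x => x = 0 \/ exists2 i, P i & x = F i)); first by left.
- by move=> x y Hx Hy; rewrite maxEle; case: ifP.
- by move=> i Hi; right; exists i.
Qed.

Lemma bm_le0 (I : Type) (r : seq I) (P : pred I) (F : I -> R) :
  (forall i, P i -> F i = 0) -> \big[Num.max/0]_(i <- r | P i) F i = 0.
Proof.
move=> H; apply: (big_ind (fun x => x = 0)) => //.
by move=> x y -> ->; rewrite maxxx.
Qed.

Variable d : nat.
Variable E : rel 'I_d.
Hypothesis hacyc : acyclic E.
Variable c : 'I_d -> 'I_d -> R.
Hypothesis hc_edge : forall i k : 'I_d, E k i -> 0 < c i k.
Hypothesis hc_diag : forall i : 'I_d, 0 < c i i.

Lemma acyc_uniq x p : path E x p -> uniq (x :: p).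
Proof.
elim: p x => [//|y p IH] x /= /andP [Exy Hp].
have := IH _ Hp => /= /andP [Hy Hu]; rewrite Hy Hu !andbT.
rewrite inE negb_or; apply/andP; split.
  apply/negP => /eqP Exy'; subst y.
  by have := hacyc Exy; rewrite connect0.
apply/negP => Hx; have Hc : connect E y x by apply: (path_connect Hp); rewrite inE Hx orbT.
by have := hacyc Exy; rewrite Hc.
Qed.

Lemma pw_cat x t1 t2 :
  path_weight c x (t1 ++ t2) = path_weight c x t1 * path_weight c (last x t1) t2.
Proof. by elim: t1 x => [|y t IH] x /=; rewrite ?mul1r // IH mulrA. Qed.

Lemma pw_pos x t : path E x t -> 0 < path_weight c x t.
Proof.
elim: t x => [|y t IH] x /=; first by rewrite ltr01.
by move=> /andP [Exy Hp]; rewrite mulr_gt0 // ?hc_edge // IH.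
Qed.

Lemma mlcoef_ge i j t : path E j t -> last j t = i ->
  c j j * path_weight c j t <= mlcoef E c i j.
Proof.
move=> Hp Hl.
have Hs : (size t < d)%N.
  have := uniq_leq_size (acyc_uniq Hp) (fun x _ => mem_enum 'I_d x).
  by rewrite size_enum_ord.
rewrite /mlcoef.
apply: le_trans _ (bm_ge (fun m : 'I_d => \big[Num.max/0]_(t0 : m.-tuple 'I_d | path E j t0 && (last j t0 == i))
       (c j j * path_weight c j t0)) (P := xpredT) (i0 := Ordinal Hs) isT).
apply: (bm_ge (fun t0 : (size t).-tuple 'I_d => c j j * path_weight c j t0)
   (P := fun t0 : (size t).-tuple 'I_d => path E j t0 && (last j t0 == i)) (i0 := in_tuple t)).
by rewrite /= Hp Hl eqxx.
Qed.

Lemma mlcoef_ge0 i j : 0 <= mlcoef E c i j.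
Proof. exact: bm_ge0_seq. Qed.

Lemma mlcoef_cases i j : mlcoef E c i j = 0 \/
  exists t, [/\ path E j t, last j t = i & mlcoef E c i j = c j j * path_weight c j t].
Proof.
rewrite /mlcoef.
case: (bm_cases (index_enum 'I_d) xpredT (fun m : 'I_d => \big[Num.max/0]_(t0 : m.-tuple 'I_d | path E j t0 && (last j t0 == i))
       (c j j * path_weight c j t0))) => [->|[m _ ->]]; first by left.
case: (bm_cases (index_enum _) (fun t0 : m.-tuple 'I_d => path E j t0 && (last j t0 == i)) (fun t0 : m.-tuple 'I_d => c j j * path_weight c j t0)) => [->|[t /andP [Hp /eqP Hl] ->]]; first by left.
by right; exists t.
Qed.

Lemma mlcoef_conn i j : mlcoef E c i j != 0 -> connect E j i.
Proof.
case: (mlcoef_cases i j) => [->|[t [Hp Hl _]]]; first by rewrite eqxx.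
by move=> _; apply/connectP; exists t.
Qed.

Lemma mlcoef_concat j l k :
  mlcoef E c j l * mlcoef E c l k <= c l l * mlcoef E c j k.
Proof.
case: (mlcoef_cases j l) => [->|[t2 [Hp2 Hl2 ->]]].
  by rewrite mul0r mulr_ge0 ?mlcoef_ge0 ?ltW.
case: (mlcoef_cases l k) => [->|[t1 [Hp1 Hl1 ->]]].
  by rewrite mulr0 mulr_ge0 ?mlcoef_ge0 ?ltW.
have H := @mlcoef_ge j k (t1 ++ t2).
rewrite cat_path Hp1 last_cat Hl1 Hp2 Hl2 pw_cat Hl1 in H.
have {}H := H isT erefl.
rewrite -mulrA; apply: ler_wpM2l; first exact: ltW.
by apply: le_trans H; rewrite mulrCA [path_weight c l t2 * _]mulrC mulrA.
Qed.

Lemma mlcoef_diag i : c i i <= mlcoef E c i i.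
Proof. by have := @mlcoef_ge i i [::] isT erefl; rewrite /= mulr1. Qed.

Lemma mlcoef_pos j l : connect E l j -> 0 < mlcoef E c j l.
Proof.
move=> /connectP [p Hp ->]; apply: lt_le_trans (mlcoef_ge Hp erefl).
by rewrite mulr_gt0 // pw_pos.
Qed.

Lemma no_back l j : l != j -> connect E l j -> mlcoef E c l j = 0.
Proof.
move=> Hne Hlj; case: (eqVneq (mlcoef E c l j) 0) => // /mlcoef_conn.
move=> /connectP [[|y p] /= Hp Hl]; first by rewrite Hl eqxx in Hne.
case/andP: Hp => Ejy Hp.
have Hyl : connect E y l by apply/connectP; exists p.
by have := hacyc Ejy; rewrite (connect_trans Hyl Hlj).
Qed.

Definition S i := \sum_(k < d) mlcoef E c i k ^+ 2.

Lemma S_pos i : 0 < S i.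
Proof.
rewrite /S (bigD1 i) //= ltr_pwDl ?sumr_ge0 // ?exprn_gt0 //.
  by apply: lt_le_trans (mlcoef_diag i).
by move=> k _; rewrite sqr_ge0.
Qed.

Lemma std_sq i l : stdcoef E c i l ^+ 2 = mlcoef E c i l ^+ 2 / S i.
Proof. by rewrite /stdcoef expr_div_n sqr_sqrtr // ltW // S_pos. Qed.

Lemma key j l : l != j -> connect E l j ->
  0 < stdcoef E c j l /\ stdcoef E c j l ^+ 2 < stdcoef E c l l ^+ 2.
Proof.
move=> Hne Hc; have Hmu := mlcoef_pos Hc.
split.
  by rewrite /stdcoef divr_gt0 // sqrtr_gt0 S_pos.
rewrite !std_sq.
have H1 : mlcoef E c j l ^+ 2 * S l < c l l ^+ 2 * S j.
  rewrite /S !mulr_sumr (bigD1 j) //= [X in _ < X](bigD1 j) //=; apply: ltr_leD.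
    rewrite (no_back Hne Hc) expr0n mulr0 mulr_gt0 ?exprn_gt0 //.
    by apply: lt_le_trans (mlcoef_diag j).
  apply: ler_sum => k _; rewrite -!exprMn ler_pXn2r ?nnegrE ?mulr_ge0 ?mlcoef_ge0 //.
    exact: mlcoef_concat.
  exact: ltW.
apply: lt_le_trans (_ : c l l ^+ 2 / S l <= _).
  by rewrite ltr_pdivrMr ?S_pos // mulrAC ltr_pdivlMr ?S_pos.
rewrite ler_pM2r ?invr_gt0 ?S_pos //.
by apply: lerXn2r; rewrite ?nnegrE ?mlcoef_diag ?mlcoef_ge0 // ltW.
Qed.
End BM.
Lemma term_le (R : realType) (b x y : R) : 1 <= b -> 0 <= y ->
  Num.max x (b * y) - Num.max x y <= (b - 1) * y.
Proof.
move=> hb hy; have hby : y <= b * y by rewrite -{1}(mul1r y) ler_wpM2r.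
rewrite mulrBl mul1r !maxEle; case: ifP => H1; case: ifP => H2; lra.
Qed.
Lemma term_lt (R : realType) (b x y : R) : 1 < b -> 0 < y -> y < x ->
  Num.max x (b * y) - Num.max x y < (b - 1) * y.
Proof.
move=> hb hy hyx; have hby : y < b * y by rewrite -{1}(mul1r y) ltr_pM2r.
rewrite mulrBl mul1r !maxEle; case: ifP => H1; case: ifP => H2; lra.
Qed.

Theorem corollary4p3 (R : realType) (d : nat) (E : rel 'I_d)
  (hacyc : acyclic E)
  (c : 'I_d -> 'I_d -> R)
  (hc_edge : forall i k : 'I_d, E k i -> 0 < c i k)
  (hc_diag : forall i : 'I_d, 0 < c i i)
  (a : R) (ha : 1 < a)
  (O : {set 'I_d}) (hO : AnS E O :&: ~: O = set0) :
  let A := stdcoef E c in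
  forall j : 'I_d, j \in ~: O ->
    (an E j :&: ~: O = set0 <->
     (forall i : 'I_d, i \in ~: (O :|: [set j]) ->
        \sum_(l in (~: O) :\ j)
           (Num.max (A i l ^+ 2) (a ^+ 2 * A j l ^+ 2)
              - Num.max (A i l ^+ 2) (A j l ^+ 2))
        = (a ^+ 2 - 1) * \sum_(l in (~: O) :\ j) A j l ^+ 2)).
Proof.
move=> A j Hj.
have ha2 : 1 < a ^+ 2 by rewrite expr2; apply: (lt_trans ha); rewrite -{1}(mulr1 a) ltr_pM2l // (lt_trans ltr01 ha).
split.
- move=> Han i Hi.
  have H0 : forall l, l \in (~: O) :\ j -> A j l = 0.
    move=> l; rewrite !inE => /andP [Hlj HlO].
    case: (eqVneq (mlcoef E c j l) 0) => [Hm|/(mlcoef_conn (c := c)) Hc].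
      by rewrite /A /stdcoef Hm mul0r.
    have : l \in an E j :&: ~: O by rewrite !inE Hlj Hc.
    by rewrite Han inE.
  rewrite big1 ?[in RHS]big1 ?mulr0 // => l Hl; rewrite H0 // expr0n /= ?mulr0 ?subrr //.
- move=> H; apply/setP => l; rewrite inE in_set0; apply/negP => /andP [].
  rewrite inE => /andP [Hlj Hc] HlO.
  have [Hp Hlt] := key hacyc hc_edge hc_diag Hlj Hc.
  have Hl : l \in ~: (O :|: [set j]) by rewrite !inE negb_or -!in_setC HlO.
  have := H l Hl; apply/eqP; rewrite lt_eqF //.
  have Hl' : l \in (~: O) :\ j by rewrite !inE Hlj -in_setC HlO.
  rewrite mulr_sumr (bigD1 l) //= [X in _ < X](bigD1 l) //=; apply: ltr_leD.
    by apply: term_lt => //; rewrite exprn_gt0.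
  apply: ler_sum => k _; apply: term_le; [exact: ltW | exact: sqr_ge0].
Qed.
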